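(* Let $?:[0,\infty]\to[0,2]$ be the Minkowski question mark function. Then $$f(t)=\int_0^1 e^{ixt}\,d?(x)\to 0\quad\text{as } |t|\to\infty$$ if and only if the two limit equalities $$\lim_{t\to+\infty} t\int_0^\infty ?\!\left(\tfrac1x\right)\sin(xt)\,dx=2,\qquad \lim_{t\to+\infty} t\int_0^\infty ?\!\left(\tfrac1x\right)\cos(xt)\,dx=0$$ hold simultaneously.
   Context: The Minkowski question mark function is defined on $[0,1]$ by $?(0)=0$, $?(1)=1$ and, for $x=[0;a_1,a_2,a_3,\dots]$ written as a regular continued fraction (finite for rational $x$, in which case the sum is finite), $?(x)=2\sum_{i\ge1}(-1)^{i+1}2^{-(a_1+\cdots+a_i)}$. It is continuous, strictly increasing and singular. It is extended to $[0,\infty]$ by the functional equation $?(x)+?(1/x)=2$ for $x>0$, with $?(\infty)=2$; thus $?(1/x)$ takes the value $2$ at $x=0$. *)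

(* Defs.v *)
From Stdlib Require Import Reals ZArith.
From Coquelicot Require Import Coquelicot.
Open Scope R_scope.

(* Gauss map on [0,1]: x |-> {1/x}, with 0 |-> 0 (expansion terminated). *)
Definition gauss (x : R) : R :=
  if Req_EM_T x 0 then 0 else frac_part (/ x).

Fixpoint cf_iter (x : R) (n : nat) : R :=
  match n with
  | O => x
  | S k => gauss (cf_iter x k)
  end.

(* a_{n+1} = floor (1 / x_n)  (meaningful while x_n <> 0);
   Int_part is the floor function. *)
Definition cf_digit (x : R) (n : nat) : Z := Int_part (/ cf_iter x n).

Fixpoint cf_digit_sum (x : R) (n : nat) : Z :=
  match n with
  | O => cf_digit x O
  | S k => (cf_digit_sum x k + cf_digit x (S k))%Z
  end.

(* n-th term (n = i - 1 >= 0) of the series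
   ?(x) = 2 sum_{i>=1} (-1)^{i+1} 2^{-(a_1+...+a_i)};
   terms beyond the end of a finite expansion are 0. *)
Definition qm_term (x : R) (n : nat) : R :=
  if Req_EM_T (cf_iter x n) 0 then 0
  else (-1) ^ n * powerRZ 2 (- cf_digit_sum x n).

Definition qm01 (x : R) : R :=
  if Req_EM_T x 0 then 0
  else if Req_EM_T x 1 then 1
  else 2 * Series (qm_term x).

(* Extension to [0, +oo) via ?(x) + ?(1/x) = 2 (value for x < 0 is an
   irrelevant convention: 0). *)
Definition minkowski (x : R) : R :=
  if Rle_dec x 0 then 0
  else if Rle_dec x 1 then qm01 x
  else 2 - qm01 (/ x).

(* x |-> ?(1/x) on [0, +oo), with value ?(oo) = 2 at x = 0. *)
Definition minkowski_recip (x : R) : R :=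
  if Req_EM_T x 0 then 2 else minkowski (/ x).

Fixpoint rs_sum (g F : R -> R) (p xi : nat -> R) (n : nat) : R :=
  match n with
  | O => 0
  | S k => rs_sum g F p xi k + g (xi k) * (F (p (S k)) - F (p k))
  end.

Definition is_RS_integral (g F : R -> R) (a b I : R) : Prop :=
  forall eps : R, 0 < eps ->
  exists delta : R, 0 < delta /\
    forall (n : nat) (p xi : nat -> R),
      p O = a -> p n = b ->
      (forall i : nat, (i < n)%nat ->
          p i <= xi i <= p (S i) /\ p (S i) - p i < delta) ->
      Rabs (rs_sum g F p xi n - I) < eps.

Definition RS_integral (g F : R -> R) (a b : R) : R :=
  iota (fun I : R => is_RS_integral g F a b I).

(* f(t) = int_0^1 e^{ixt} d?(x) = int_0^1 cos(xt) d?(x) + i int_0^1 sin(xt) d?(x) *)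
Definition minkowski_char (t : R) : C :=
  (RS_integral (fun x => cos (x * t)) minkowski 0 1,
   RS_integral (fun x => sin (x * t)) minkowski 0 1).

Definition int_sin (t : R) : R :=
  RInt_gen (fun x => minkowski_recip x * sin (x * t))
           (at_point 0) (Rbar_locally p_infty).

Definition int_cos (t : R) : R :=
  RInt_gen (fun x => minkowski_recip x * cos (x * t))
           (at_point 0) (Rbar_locally p_infty).

(* Main.v *)
Require Import Defs.
From Stdlib Require Import Reals Lra Lia ZArith.
From Coquelicot Require Import Coquelicot.
Open Scope R_scope.


Lemma Int_part_unique r z : IZR z <= r < IZR z + 1 -> Int_part r = z.
Proof.
  intros [H1 H2]. destruct (base_Int_part r) as [H3 H4].
  assert (A : (Int_part r < z + 1)%Z) by (apply lt_IZR; rewrite plus_IZR; simpl; lra).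
  assert (B : (z < Int_part r + 1)%Z) by (apply lt_IZR; rewrite plus_IZR; simpl; lra).
  lia.
Qed.

Definition p2 (a : Z) : R := powerRZ 2 (- a).

Lemma p2_pos a : 0 < p2 a.
Proof. unfold p2; apply powerRZ_lt; lra. Qed.

Lemma p2_succ a : p2 (a + 1) = p2 a / 2.
Proof.
  unfold p2. replace (- (a + 1))%Z with (- a + - 1)%Z by lia.
  rewrite powerRZ_add by lra. simpl. field.
Qed.

Lemma p2_1 : p2 1 = 1/2.
Proof. unfold p2; simpl; field. Qed.

Lemma p2_mono a b : (a <= b)%Z -> p2 b <= p2 a.
Proof.
  intros H. replace b with (a + Z.of_nat (Z.to_nat (b - a)))%Z by lia.
  induction (Z.to_nat (b - a)) as [|k IH].
  - simpl. rewrite Z.add_0_r. lra.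
  - rewrite Nat2Z.inj_succ. replace (a + Z.succ (Z.of_nat k))%Z with ((a + Z.of_nat k) + 1)%Z by lia.
    rewrite p2_succ. pose proof (p2_pos (a + Z.of_nat k)). lra.
Qed.

Lemma p2_le_half a : (1 <= a)%Z -> p2 a <= 1/2.
Proof. intros H. rewrite <- p2_1. apply p2_mono; lia. Qed.

Lemma gauss_range x : 0 <= gauss x < 1.
Proof.
  unfold gauss. destruct (Req_EM_T x 0). lra. destruct (base_fp (/ x)); lra.
Qed.

Lemma cf_iter_shift x n : cf_iter x (S n) = cf_iter (gauss x) n.
Proof. induction n; simpl in *; [reflexivity| now rewrite IHn]. Qed.

Lemma cf_iter_0 n : cf_iter 0 n = 0.
Proof.
  induction n; simpl; auto. rewrite IHn. unfold gauss. destruct (Req_EM_T 0 0); lra.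
Qed.

Lemma cf_digit_shift x n : cf_digit x (S n) = cf_digit (gauss x) n.
Proof. unfold cf_digit. now rewrite cf_iter_shift. Qed.

Lemma cf_digit_sum_shift x n :
  cf_digit_sum x (S n) = (cf_digit x 0 + cf_digit_sum (gauss x) n)%Z.
Proof.
  induction n.
  - simpl. now rewrite cf_digit_shift.
  - change (cf_digit_sum x (S (S n))) with (cf_digit_sum x (S n) + cf_digit x (S (S n)))%Z.
    rewrite IHn, cf_digit_shift. simpl. lia.
Qed.

Lemma digit_ge1 x : 0 < x <= 1 -> (1 <= Int_part (/ x))%Z.
Proof.
  intros H. destruct (base_Int_part (/ x)) as [_ H2].
  assert (1 <= / x). { rewrite <- Rinv_1. apply Rinv_le_contravar; lra. }
  assert (0 < IZR (Int_part (/ x))) by lra.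
  apply lt_IZR in H1. lia.
Qed.

Lemma qm_term_0_shift x : x <> 0 -> qm_term x 0 = p2 (Int_part (/ x)).
Proof.
  intros H. unfold qm_term. simpl. destruct (Req_EM_T x 0); [contradiction|].
  unfold p2, cf_digit. simpl. ring.
Qed.

Lemma qm_term_S_shift x n : x <> 0 ->
  qm_term x (S n) = - p2 (Int_part (/ x)) * qm_term (gauss x) n.
Proof.
  intros H. unfold qm_term. rewrite cf_iter_shift, cf_digit_sum_shift.
  destruct (Req_EM_T (cf_iter (gauss x) n) 0). ring.
  unfold p2, cf_digit. simpl cf_iter.
  replace (- (Int_part (/ x) + cf_digit_sum (gauss x) n))%Z
    with (- Int_part (/ x) + - cf_digit_sum (gauss x) n)%Z by lia.
  rewrite powerRZ_add by lra. simpl pow. ring.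
Qed.

Lemma qm_term_zero n : qm_term 0 n = 0.
Proof. unfold qm_term. rewrite cf_iter_0. destruct (Req_EM_T 0 0); lra. Qed.

Lemma qm_term_bound n : forall x, 0 <= x <= 1 -> Rabs (qm_term x n) <= (1/2) ^ (S n).
Proof.
  induction n; intros x Hx.
  - destruct (Req_EM_T x 0) as [->|Hn].
    + rewrite qm_term_zero, Rabs_R0. simpl; lra.
    + rewrite qm_term_0_shift by auto. pose proof (p2_pos (Int_part (/x))).
      rewrite Rabs_pos_eq by lra. simpl. rewrite Rmult_1_r. apply p2_le_half, digit_ge1; lra.
  - destruct (Req_EM_T x 0) as [->|Hn].
    + rewrite qm_term_zero, Rabs_R0. apply pow_le; lra.
    + rewrite qm_term_S_shift by auto. rewrite Rabs_mult, Rabs_Ropp.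
      pose proof (p2_pos (Int_part (/x))). rewrite (Rabs_pos_eq (p2 _)) by lra.
      pose proof (p2_le_half (Int_part (/ x)) (digit_ge1 x ltac:(lra))).
      pose proof (gauss_range x).
      specialize (IHn (gauss x) ltac:(lra)).
      change ((1/2)^(S (S n))) with (1/2 * (1/2)^(S n)).
      apply Rmult_le_compat; auto; try lra. apply Rabs_pos.
Qed.

Lemma ex_series_geom_half : ex_series (fun n => (1/2) ^ S n).
Proof.
  apply (ex_series_ext (fun n => (1/2) * (1/2)^n)). intros; simpl; ring.
  exact (@ex_series_scal_l R_AbsRing R_NormedModule (1/2) (fun n => (1/2)^n)
    (ex_series_geom (1/2) ltac:(rewrite Rabs_pos_eq; lra))).
Qed.

Lemma Series_geom_half : Series (fun n => (1/2) ^ S n) = 1.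
Proof.
  rewrite (Series_ext _ (fun n => (1/2) * (1/2)^n)) by (intros; simpl; ring).
  rewrite Series_scal_l.
  pose proof (is_series_unique _ _ (is_series_geom (1/2) ltac:(rewrite Rabs_pos_eq; lra))) as E.
  change (pow (1/2)) with (fun n => (1/2)^n). rewrite E. field.
Qed.

Lemma qm_ex_series x : 0 <= x <= 1 -> ex_series (qm_term x).
Proof.
  intros Hx. apply (@ex_series_le R_AbsRing R_CompleteNormedModule _ (fun n => (1/2)^S n)).
  intros n. apply qm_term_bound; auto. apply ex_series_geom_half.
Qed.

Definition Sq (x : R) : R := Series (qm_term x).

Lemma Sq_abs x : 0 <= x <= 1 -> Rabs (Sq x) <= 1.
Proof.
  intros Hx. unfold Sq. eapply Rle_trans. apply Series_Rabs.
  apply (@ex_series_le R_AbsRing R_CompleteNormedModule _ (fun n => (1/2)^S n)). intros n. unfold norm; simpl.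
  rewrite Rabs_Rabsolu. apply qm_term_bound; auto. apply ex_series_geom_half.
  rewrite <- Series_geom_half. apply Series_le. intros n; split. apply Rabs_pos.
  apply qm_term_bound; auto. apply ex_series_geom_half.
Qed.

Lemma Sq_0 : Sq 0 = 0.
Proof.
  unfold Sq. rewrite (Series_ext _ (fun n => 0 * 0)) by (intros; rewrite qm_term_zero; ring).
  rewrite Series_scal_l. ring.
Qed.

Lemma Sq_rec x : 0 < x <= 1 -> Sq x = p2 (Int_part (/ x)) * (1 - Sq (gauss x)).
Proof.
  intros Hx. unfold Sq. rewrite Series_incr_1 by (apply qm_ex_series; lra).
  rewrite qm_term_0_shift by lra.
  rewrite (Series_ext _ (fun k => (- p2 (Int_part (/ x))) * qm_term (gauss x) k))
    by (intros; apply qm_term_S_shift; lra).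
  rewrite Series_scal_l. ring.
Qed.


Lemma Sq_nonneg x : 0 <= x <= 1 -> 0 <= Sq x.
Proof.
  intros Hx. destruct (Req_EM_T x 0) as [->|Hn]. rewrite Sq_0; lra.
  rewrite Sq_rec by lra. pose proof (gauss_range x).
  pose proof (Sq_abs (gauss x) ltac:(lra)). apply Rabs_le_between in H0.
  pose proof (p2_pos (Int_part (/ x))). apply Rmult_le_pos; lra.
Qed.

Lemma Sq_le_p2 x : 0 < x <= 1 -> Sq x <= p2 (Int_part (/ x)).
Proof.
  intros Hx. rewrite Sq_rec by lra. pose proof (gauss_range x).
  pose proof (Sq_nonneg (gauss x) ltac:(lra)).
  pose proof (p2_pos (Int_part (/ x))). nra.
Qed.

Lemma Sq_le_half x : 0 <= x <= 1 -> Sq x <= 1/2.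
Proof.
  intros Hx. destruct (Req_EM_T x 0) as [->|Hn]. rewrite Sq_0; lra.
  eapply Rle_trans. apply Sq_le_p2; lra. apply p2_le_half, digit_ge1; lra.
Qed.

Lemma Sq_mono_aux n : forall x y, 0 <= x < y -> y <= 1 -> Sq x - Sq y <= (1/2)^n.
Proof.
  induction n; intros x y Hxy Hy.
  - simpl. pose proof (Sq_le_half x ltac:(lra)). pose proof (Sq_nonneg y ltac:(lra)). lra.
  - destruct (Req_EM_T x 0) as [->|Hn].
    + rewrite Sq_0. pose proof (Sq_nonneg y ltac:(lra)). pose proof (pow_le (1/2) (S n)). lra.
    + assert (Hinv : / y < / x) by (apply Rinv_lt_contravar; nra).
      destruct (base_Int_part (/ x)) as [A1 A2]. destruct (base_Int_part (/ y)) as [B1 B2].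
      set (a := Int_part (/ x)) in *. set (b := Int_part (/ y)) in *.
      assert (Hab : (b <= a)%Z). { assert (IZR b < IZR (a + 1)) by (rewrite plus_IZR; simpl; lra).
        apply lt_IZR in H. lia. }
      rewrite (Sq_rec x), (Sq_rec y) by lra. fold a b.
      pose proof (gauss_range x) as Gx. pose proof (gauss_range y) as Gy.
      destruct (Z.eq_dec a b) as [E|E].
      * assert (gauss y < gauss x).
        { unfold gauss. destruct (Req_EM_T y 0); [lra|]. destruct (Req_EM_T x 0); [lra|].
          unfold frac_part. fold a b. rewrite E. lra. }
        specialize (IHn (gauss y) (gauss x) ltac:(lra) ltac:(lra)).
        rewrite E. pose proof (p2_pos b). pose proof (p2_le_half b).
        assert (1 <= b)%Z by (unfold b; apply digit_ge1; lra).
        specialize (H1 H2).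
        change ((1/2)^(S n)) with (1/2 * (1/2)^n).
        pose proof (pow_le (1/2) n). nra.
      * assert (p2 a <= p2 b / 2) by (rewrite <- p2_succ; apply p2_mono; lia).
        pose proof (Sq_le_half (gauss y) ltac:(lra)).
        pose proof (Sq_le_p2 x ltac:(lra)). rewrite Sq_rec in H1 by lra. fold a in H1.
        pose proof (p2_pos b). pose proof (pow_le (1/2) (S n)). nra.
Qed.

Lemma Sq_mono x y : 0 <= x <= y -> y <= 1 -> Sq x <= Sq y.
Proof.
  intros Hxy Hy. destruct (Req_dec x y) as [->|Hne]. lra.
  apply Rnot_lt_le. intros Hlt.
  destruct (pow_lt_1_zero (1/2) ltac:(rewrite Rabs_pos_eq; lra) (Sq x - Sq y) ltac:(lra)) as [N HN].
  specialize (HN N (Nat.le_refl N)). rewrite Rabs_pos_eq in HN by (apply pow_le; lra).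
  pose proof (Sq_mono_aux N x y ltac:(lra) Hy). lra.
Qed.


Notation G := minkowski_recip.

Lemma Int_part_1 : Int_part 1 = 1%Z.
Proof. apply Int_part_unique. simpl; lra. Qed.

Lemma Sq_1 : Sq 1 = 1/2.
Proof.
  rewrite Sq_rec by lra. rewrite Rinv_1, Int_part_1, p2_1.
  replace (gauss 1) with 0. rewrite Sq_0; lra.
  unfold gauss. destruct (Req_EM_T 1 0); [lra|]. unfold frac_part. rewrite Rinv_1, Int_part_1. simpl; lra.
Qed.

Lemma qm01_Sq x : 0 <= x <= 1 -> qm01 x = 2 * Sq x.
Proof.
  intros Hx. unfold qm01. destruct (Req_EM_T x 0) as [->|H]. rewrite Sq_0; lra.
  destruct (Req_EM_T x 1) as [->|H']. rewrite Sq_1; lra. reflexivity.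
Qed.

Lemma G_0 : G 0 = 2.
Proof. unfold minkowski_recip. destruct (Req_EM_T 0 0); lra. Qed.

Lemma G_01 x : 0 < x < 1 -> G x = 2 - 2 * Sq x.
Proof.
  intros Hx. unfold minkowski_recip. destruct (Req_EM_T x 0); [lra|].
  unfold minkowski. assert (1 < / x). { rewrite <- Rinv_1. apply Rinv_lt_contravar; lra. }
  destruct (Rle_dec (/ x) 0); [lra|]. destruct (Rle_dec (/ x) 1); [lra|].
  rewrite Rinv_inv, qm01_Sq by lra. ring.
Qed.

Lemma G_ge1 x : 1 <= x -> G x = 2 * Sq (/ x).
Proof.
  intros Hx. unfold minkowski_recip. destruct (Req_EM_T x 0); [lra|].
  unfold minkowski. assert (0 < / x) by (apply Rinv_0_lt_compat; lra).
  assert (/ x <= 1). { rewrite <- Rinv_1. apply Rinv_le_contravar; lra. }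
  destruct (Rle_dec (/ x) 0); [lra|]. destruct (Rle_dec (/ x) 1); [|lra].
  apply qm01_Sq; lra.
Qed.

Lemma G_1 : G 1 = 1.
Proof. rewrite G_ge1, Rinv_1, Sq_1; lra. Qed.

Lemma minkowski_G x : 0 <= x <= 1 -> minkowski x = 2 - G x.
Proof.
  intros Hx. destruct (Req_EM_T x 0) as [->|H0].
  - rewrite G_0. unfold minkowski. destruct (Rle_dec 0 0); lra.
  - destruct (Req_EM_T x 1) as [->|H1].
    + rewrite G_1. unfold minkowski. destruct (Rle_dec 1 0); [lra|]. destruct (Rle_dec 1 1); [|lra].
      rewrite qm01_Sq, Sq_1; lra.
    + rewrite G_01 by lra. unfold minkowski. destruct (Rle_dec x 0); [lra|].
      destruct (Rle_dec x 1); [|lra]. rewrite qm01_Sq; lra.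
Qed.

Lemma gauss_inv y : 0 < y -> gauss (/ y) = frac_part y.
Proof.
  intros Hy. unfold gauss. destruct (Req_EM_T (/ y) 0).
  - exfalso. pose proof (Rinv_0_lt_compat y Hy). lra.
  - rewrite Rinv_inv. reflexivity.
Qed.

Lemma G_shift x : 0 <= x -> G (x + 1) = G x / 2.
Proof.
  intros Hx. destruct (Req_EM_T x 0) as [->|H0].
  - rewrite Rplus_0_l, G_1, G_0. lra.
  - rewrite G_ge1 by lra.
    assert (Hi : Int_part (x + 1) = (Int_part x + 1)%Z).
    { apply Int_part_unique. destruct (base_Int_part x). rewrite plus_IZR. simpl. lra. }
    assert (Hf : frac_part (x + 1) = frac_part x).
    { unfold frac_part. rewrite Hi, plus_IZR. simpl. ring. }
    rewrite Sq_rec. 2:{ split. apply Rinv_0_lt_compat; lra. rewrite <- Rinv_1. apply Rinv_le_contravar; lra. }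
    rewrite Rinv_inv, gauss_inv by lra. rewrite Hi, Hf, p2_succ.
    destruct (Rlt_dec x 1) as [Hl|Hl].
    + assert (Int_part x = 0%Z) by (apply Int_part_unique; simpl; lra).
      assert (frac_part x = x) by (unfold frac_part; rewrite H; simpl; ring).
      rewrite H, H1, G_01 by lra. unfold p2. simpl. field.
    + rewrite (G_ge1 x) by lra. rewrite (Sq_rec (/ x)).
      2:{ split. apply Rinv_0_lt_compat; lra. rewrite <- Rinv_1. apply Rinv_le_contravar; lra. }
      rewrite Rinv_inv, gauss_inv by lra. field.
Qed.

Lemma G_01_range x : 0 <= x <= 1 -> 1 <= G x <= 2.
Proof.
  intros Hx. destruct (Req_EM_T x 0) as [->|H0]. rewrite G_0; lra.
  destruct (Req_EM_T x 1) as [->|H1]. rewrite G_1; lra.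
  rewrite G_01 by lra. pose proof (Sq_nonneg x Hx). pose proof (Sq_le_half x Hx). lra.
Qed.

Lemma G_01_mono x y : 0 <= x <= y -> y <= 1 -> G y <= G x.
Proof.
  intros Hxy Hy. destruct (Req_EM_T y 1) as [->|Hy1].
  - rewrite G_1. pose proof (G_01_range x ltac:(lra)). lra.
  - destruct (Req_EM_T x 0) as [->|Hx0].
    + rewrite G_0. pose proof (G_01_range y ltac:(lra)). lra.
    + rewrite !G_01 by lra. pose proof (Sq_mono x y ltac:(lra) ltac:(lra)). lra.
Qed.

Lemma G_mono_n n : forall x y, 0 <= x <= y -> y <= INR n + 1 -> G y <= G x.
Proof.
  induction n; intros x y Hxy Hy.
  - simpl in Hy. apply G_01_mono; lra.
  - rewrite S_INR in Hy. destruct (Rle_dec y (INR n + 1)) as [Hy'|Hy'].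
    + apply IHn; lra.
    + pose proof (pos_INR n).
      replace y with ((y - 1) + 1) by ring. rewrite G_shift by lra.
      destruct (Rle_dec 1 x) as [Hx|Hx].
      * replace x with ((x - 1) + 1) by ring. rewrite G_shift by lra.
        pose proof (IHn (x - 1) (y - 1) ltac:(lra) ltac:(lra)). lra.
      * pose proof (IHn 0 (y - 1) ltac:(lra) ltac:(lra)). rewrite G_0 in H0.
        pose proof (G_01_mono x 1 ltac:(lra) ltac:(lra)). rewrite G_1 in H1. lra.
Qed.

Lemma G_mono x y : 0 <= x <= y -> G y <= G x.
Proof.
  intros H. destruct (INR_unbounded y) as [n Hn]. apply (G_mono_n n); lra.
Qed.

Lemma G_nonneg_n n : forall x, 0 <= x <= INR n + 1 -> 0 <= G x.
Proof.
  induction n; intros x Hx.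
  - simpl in Hx. pose proof (G_01_range x ltac:(lra)). lra.
  - rewrite S_INR in Hx. destruct (Rle_dec x 1).
    + pose proof (G_01_range x ltac:(lra)). lra.
    + replace x with ((x - 1) + 1) by ring. rewrite G_shift by lra.
      pose proof (IHn (x - 1) ltac:(lra)). lra.
Qed.

Lemma G_range x : 0 <= x -> 0 <= G x <= 2.
Proof.
  intros H. split.
  - destruct (INR_unbounded x) as [n Hn]. apply (G_nonneg_n n); lra.
  - rewrite <- G_0. apply G_mono; lra.
Qed.


Lemma ind_int (g phi : R -> R) a b c :
  a <= b -> (forall x y, a <= x <= y -> y <= b -> g y <= g x) ->
  (forall x, continuous phi x) ->
  ex_RInt (fun x => if Rle_dec c (g x) then phi x else 0) a b.
Proof.
  intros Hab Hg Hphi.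
  set (E := fun x => x = a \/ (a <= x <= b /\ c <= g x)).
  assert (HB : bound E). { exists b. intros x [->|[H _]]; lra. }
  destruct (completeness E HB (ex_intro _ a (or_introl eq_refl))) as [s [Hs1 Hs2]].
  assert (Has : a <= s) by (apply Hs1; left; auto).
  assert (Hsb : s <= b) by (apply Hs2; intros x [->|[H _]]; lra).
  apply ex_RInt_Chasles with s.
  - apply ex_RInt_ext with phi.
    + rewrite Rmin_left, Rmax_right by lra. intros x Hx.
      destruct (Rle_dec c (g x)) as [|Hn]; auto. exfalso.
      assert (exists y, E y /\ x < y) as [y [Ey Hy]].
      { apply Classical_Prop.NNPP. intros Hne. assert (is_upper_bound E x).
        { intros y Ey. apply Rnot_lt_le. intros Hl. apply Hne. exists y; auto. }
        specialize (Hs2 x H). lra. }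
      destruct Ey as [->|[Hy1 Hy2]]. lra.
      apply Hn. eapply Rle_trans. apply Hy2. apply Hg; lra.
    + apply (ex_RInt_continuous (V := R_CompleteNormedModule)). intros; apply Hphi.
  - apply ex_RInt_ext with (fun _ => 0).
    + rewrite Rmin_left, Rmax_right by lra. intros x Hx.
      destruct (Rle_dec c (g x)) as [Hc|]; auto. exfalso.
      assert (E x) by (right; split; [lra|auto]). specialize (Hs1 x H). lra.
    + apply (ex_RInt_const (V := R_NormedModule)).
Qed.

Fixpoint Aind (g : R -> R) (eps : R) (K : nat) (x : R) : R :=
  match K with
  | O => 0
  | S k => Aind g eps k x + (if Rle_dec (INR (S k) * eps) (g x) then eps else 0)
  end.

Lemma Aind_full g eps K x : 0 < eps -> INR K * eps <= g x -> Aind g eps K x = INR K * eps.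
Proof.
  intros He. induction K; intros H. simpl; ring.
  change (Aind g eps (S K) x) with (Aind g eps K x + (if Rle_dec (INR (S K) * eps) (g x) then eps else 0)).
  destruct (Rle_dec (INR (S K) * eps) (g x)); [|contradiction].
  rewrite IHK. rewrite S_INR. ring. rewrite S_INR in H. lra.
Qed.

Lemma Aind_approx g eps K x : 0 < eps -> 0 <= g x <= INR K * eps ->
  g x - eps < Aind g eps K x <= g x.
Proof.
  intros He. induction K; intros H.
  - simpl in *. lra.
  - change (Aind g eps (S K) x) with (Aind g eps K x + (if Rle_dec (INR (S K) * eps) (g x) then eps else 0)).
    destruct (Rle_dec (INR (S K) * eps) (g x)) as [H1|H1].
    + rewrite Aind_full by (rewrite S_INR in H1; lra). rewrite S_INR in *. lra.
    + destruct (Rle_dec (g x) (INR K * eps)) as [H2|H2].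
      * specialize (IHK ltac:(lra)). lra.
      * rewrite Aind_full by lra. rewrite S_INR in *. lra.
Qed.

Lemma Aind_int g phi eps K a b :
  a <= b -> (forall x y, a <= x <= y -> y <= b -> g y <= g x) ->
  (forall x, continuous phi x) ->
  ex_RInt (fun x => Aind g eps K x * phi x) a b.
Proof.
  intros Hab Hg Hphi. induction K.
  - simpl. apply ex_RInt_ext with (fun _ => 0). intros; simpl; rewrite Rmult_0_l; reflexivity.
    apply (ex_RInt_const (V := R_NormedModule)).
  - apply ex_RInt_ext with (fun x => plus (Aind g eps K x * phi x)
       (scal eps (if Rle_dec (INR (S K) * eps) (g x) then phi x else 0))).
    + intros x _. simpl. unfold plus, scal; simpl. unfold mult; simpl.
      destruct (Rle_dec _ _); ring.
    + apply (ex_RInt_plus (V := R_NormedModule)); auto. apply (ex_RInt_scal (V := R_NormedModule)). apply ind_int; auto.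
Qed.

Lemma mono_mul_int (g phi : R -> R) a b M :
  a <= b -> (forall x y, a <= x <= y -> y <= b -> g y <= g x) ->
  (forall x, a <= x <= b -> 0 <= g x <= M) ->
  (forall x, continuous phi x) -> (forall x, Rabs (phi x) <= 1) ->
  ex_RInt (fun x => g x * phi x) a b.
Proof.
  intros Hab Hg HM Hphi Hb.
  destruct (INR_unbounded M) as [m Hm].
  set (eps := fun n : nat => / (INR n + 1)).
  assert (Heps : forall n, 0 < eps n) by (intros; unfold eps; apply Rinv_0_lt_compat; pose proof (pos_INR n); lra).
  set (f := fun (n : nat) (x : R) =>
    if Rle_dec a x then if Rle_dec x b then Aind g (eps n) ((S n) * m) x * phi x else g x * phi x
    else g x * phi x).
  assert (Hf : forall n, ex_RInt (f n) a b).
  { intros n. apply ex_RInt_ext with (fun x => Aind g (eps n) ((S n) * m) x * phi x).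
    - rewrite Rmin_left, Rmax_right by lra. intros x Hx. unfold f.
      destruct (Rle_dec a x); [|lra]. destruct (Rle_dec x b); [|lra]. auto.
    - apply Aind_int; auto. }
  destruct (filterlim_RInt f a b eventually eventually_filter (fun x => g x * phi x)
    (fun n => RInt (f n) a b)) as [If [_ HI]].
  - intros n. apply RInt_correct, Hf.
  - intros P [e HP]. 
    destruct (nfloor_ex (/ e)) as [N HN]. left. apply Rinv_0_lt_compat, cond_pos.
    exists N. intros n Hn. apply HP. intros x. unfold f.
    change (Rabs ((if Rle_dec a x then if Rle_dec x b then Aind g (eps n) ((S n) * m) x * phi x else g x * phi x
    else g x * phi x) - g x * phi x) < e). rewrite Rabs_minus_sym.
    destruct (Rle_dec a x); [destruct (Rle_dec x b)|].
    + assert (Hx : 0 <= g x <= INR (S n * m) * eps n).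
      { rewrite mult_INR. unfold eps. rewrite S_INR.
        replace ((INR n + 1) * INR m * / (INR n + 1)) with (INR m) by (field; pose proof (pos_INR n); lra).
        specialize (HM x ltac:(lra)). lra. }
      pose proof (Aind_approx g (eps n) _ x (Heps n) Hx).
      replace (g x * phi x - Aind g (eps n) (S n * m) x * phi x) with
        ((g x - Aind g (eps n) (S n * m) x) * phi x) by ring.
      rewrite Rabs_mult. specialize (Hb x).
      assert (eps n < e).
      { unfold eps. destruct HN as [_ HN]. apply le_INR in Hn.
        assert (0 < e) by apply cond_pos.
        rewrite <- (Rinv_inv e). apply Rinv_lt_contravar.
        apply Rmult_lt_0_compat. apply Rinv_0_lt_compat; auto. pose proof (pos_INR n); lra. lra. }
      rewrite Rabs_pos_eq by lra. pose proof (Heps n). nra.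
    + rewrite Rminus_diag, Rabs_R0. apply cond_pos.
    + rewrite Rminus_diag, Rabs_R0. apply cond_pos.
  - exists If; auto.
Qed.


Section IBP.
Variables (g phi dphi : R -> R) (a0 b0 L : R).
Hypothesis Hg : forall x y, a0 <= x <= y -> y <= b0 -> g y <= g x.
Hypothesis Hd : forall x, is_derive phi x (dphi x).
Hypothesis Hdc : forall x, continuous dphi x.
Hypothesis HL : forall x, Rabs (dphi x) <= L.
Hypothesis Hint : forall u v, a0 <= u <= v -> v <= b0 -> ex_RInt (fun x => g x * dphi x) u v.

Lemma ex_dphi u v : ex_RInt dphi u v.
Proof. apply (ex_RInt_continuous (V := R_CompleteNormedModule)). intros; apply Hdc. Qed.

Lemma RInt_dphi u v : RInt dphi u v = phi v - phi u.
Proof.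
  apply is_RInt_unique. apply (is_RInt_derive (V := R_CompleteNormedModule)).
  intros; apply Hd. intros; apply Hdc.
Qed.

Lemma RInt_shifted (k u v : R) : a0 <= u <= v -> v <= b0 ->
  RInt (fun x => (k - g x) * dphi x) u v = k * (phi v - phi u) - RInt (fun x => g x * dphi x) u v.
Proof.
  intros H1 H2. rewrite <- RInt_dphi.
  rewrite (RInt_ext _ (fun x => minus (scal k (dphi x)) (g x * dphi x))).
  2:{ intros; unfold minus, plus, opp, scal; simpl. unfold mult; simpl. ring. }
  rewrite (RInt_minus (V := R_CompleteNormedModule)).
  rewrite (RInt_scal (V := R_CompleteNormedModule)). reflexivity.
  apply ex_dphi. apply (ex_RInt_scal (V := R_NormedModule)), ex_dphi. apply Hint; lra.
Qed.

Lemma ex_shifted (k u v : R) : a0 <= u <= v -> v <= b0 ->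
  ex_RInt (fun x => (k - g x) * dphi x) u v.
Proof.
  intros H1 H2.
  apply (ex_RInt_ext (V := R_NormedModule) (fun x => minus (scal k (dphi x)) (g x * dphi x))).
  intros; unfold minus, plus, opp, scal; simpl. unfold mult; simpl. ring.
  apply (ex_RInt_minus (V := R_NormedModule)).
  apply (ex_RInt_scal (V := R_NormedModule)), ex_dphi. apply Hint; lra.
Qed.

Lemma local_bound a b c : a0 <= a -> a <= c <= b -> b <= b0 ->
  Rabs (phi b * g b - phi a * g a - phi c * (g b - g a) - RInt (fun x => g x * dphi x) a b)
  <= L * (b - a) * (g a - g b).
Proof.
  intros Ha Hc Hb.
  rewrite <- (RInt_Chasles (V := R_CompleteNormedModule) _ a c b) by (apply Hint; lra).
  pose proof (RInt_shifted (g b) c b ltac:(lra) ltac:(lra)) as E1.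
  pose proof (RInt_shifted (g a) a c ltac:(lra) ltac:(lra)) as E2.
  assert (B1 : Rabs (RInt (fun x => (g b - g x) * dphi x) c b) <= (b - c) * ((g a - g b) * L)).
  { apply abs_RInt_le_const. lra. apply ex_shifted; lra.
    intros t Ht. rewrite Rabs_mult. pose proof (Hg a t ltac:(lra) ltac:(lra)).
    pose proof (Hg t b ltac:(lra) ltac:(lra)). rewrite Rabs_minus_sym, Rabs_pos_eq by lra.
    apply Rmult_le_compat; try lra. apply Rabs_pos. apply HL. }
  assert (B2 : Rabs (RInt (fun x => (g a - g x) * dphi x) a c) <= (c - a) * ((g a - g b) * L)).
  { apply abs_RInt_le_const. lra. apply ex_shifted; lra.
    intros t Ht. rewrite Rabs_mult. pose proof (Hg a t ltac:(lra) ltac:(lra)).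
    pose proof (Hg t b ltac:(lra) ltac:(lra)). rewrite Rabs_pos_eq by lra.
    apply Rmult_le_compat; try lra. apply Rabs_pos. apply HL. }
  unfold plus; simpl.
  replace (phi b * g b - phi a * g a - phi c * (g b - g a) -
    (RInt (fun x : R => g x * dphi x) a c + RInt (fun x : R => g x * dphi x) c b))
   with (RInt (fun x => (g b - g x) * dphi x) c b + RInt (fun x => (g a - g x) * dphi x) a c)
   by (rewrite E1, E2; ring).
  eapply Rle_trans. apply Rabs_triang. nra.
Qed.

Lemma chain_le (p : nat -> R) n : (forall i, (i < n)%nat -> p i <= p (S i)) ->
  forall i j, (i <= j <= n)%nat -> p i <= p j.
Proof.
  intros H i j [Hij Hjn]. induction Hij. lra.
  eapply Rle_trans. apply IHHij. lia. apply H. lia.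
Qed.

Lemma RS_bound (p xi : nat -> R) (delta : R) n :
  0 <= L -> 0 <= delta ->
  (forall i, (i <= n)%nat -> a0 <= p i <= b0) ->
  (forall i, (i < n)%nat -> p i <= xi i <= p (S i) /\ p (S i) - p i <= delta) ->
  Rabs (rs_sum phi g p xi n -
        (phi (p n) * g (p n) - phi (p 0%nat) * g (p 0%nat) - RInt (fun x => g x * dphi x) (p 0%nat) (p n)))
  <= L * delta * (g (p 0%nat) - g (p n)).
Proof.
  intros HL0 Hd0. induction n; intros Hp Hx.
  - simpl. rewrite RInt_point. unfold zero; simpl. rewrite Rminus_diag.
    match goal with |- Rabs ?e <= _ => replace e with 0 by ring end.
    rewrite Rabs_R0. lra.
  - assert (Hc : forall i j, (i <= j <= S n)%nat -> p i <= p j).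
    { apply chain_le. intros i Hi. destruct (Hx i Hi) as [[A B] _]. lra. }
    specialize (IHn ltac:(intros; apply Hp; lia) ltac:(intros; apply Hx; lia)).
    simpl rs_sum.
    rewrite <- (RInt_Chasles (V := R_CompleteNormedModule) _ (p 0%nat) (p n) (p (S n))).
    2:{ apply Hint. split. apply Hp; lia. apply Hc; lia. apply Hp; lia. }
    2:{ apply Hint. split. apply Hp; lia. apply Hc; lia. apply Hp; lia. }
    destruct (Hx n (Nat.lt_succ_diag_r n)) as [[X1 X2] X3].
    pose proof (local_bound (p n) (p (S n)) (xi n) ltac:(apply Hp; lia) ltac:(lra) ltac:(apply Hp; lia)) as LB.
    unfold plus; simpl.
    match goal with |- Rabs ?e <= _ =>
      replace e with ((rs_sum phi g p xi n -
        (phi (p n) * g (p n) - phi (p 0%nat) * g (p 0%nat) - RInt (fun x => g x * dphi x) (p 0%nat) (p n)))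
        - (phi (p (S n)) * g (p (S n)) - phi (p n) * g (p n) - phi (xi n) * (g (p (S n)) - g (p n)) -
           RInt (fun x => g x * dphi x) (p n) (p (S n)))) by ring end.
    eapply Rle_trans. apply Rabs_triang. rewrite Rabs_Ropp.
    assert (g (p (S n)) <= g (p n)) by (apply Hg; [split; [apply Hp; lia| lra]| apply Hp; lia]).
    assert (L * (p (S n) - p n) * (g (p n) - g (p (S n))) <= L * delta * (g (p n) - g (p (S n)))).
    { apply Rmult_le_compat_r. lra. apply Rmult_le_compat_l; lra. }
    lra.
Qed.

End IBP.


Lemma rs_sum_neg (phi : R -> R) p xi n :
  (forall i, (i <= n)%nat -> 0 <= p i <= 1) ->
  rs_sum phi minkowski p xi n = - rs_sum phi G p xi n.
Proof.
  induction n; intros H; simpl. ring.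
  rewrite IHn by (intros; apply H; lia).
  rewrite !minkowski_G by (apply H; lia). ring.
Qed.

Lemma RS_mink (phi dphi : R -> R) L :
  0 <= L ->
  (forall x, is_derive phi x (dphi x)) -> (forall x, continuous dphi x) ->
  (forall x, Rabs (dphi x) <= L) ->
  (forall u v, 0 <= u <= v -> v <= 1 -> ex_RInt (fun x => G x * dphi x) u v) ->
  is_RS_integral phi minkowski 0 1
    (- (phi 1 * G 1 - phi 0 * G 0 - RInt (fun x => G x * dphi x) 0 1)).
Proof.
  intros HL0 Hd Hdc HL Hint eps Heps.
  exists (eps / (L + 1) / 2). split.
  { apply Rmult_lt_0_compat. apply Rdiv_lt_0_compat; lra. lra. }
  intros n p xi H0 Hn Hx.
  assert (Hc : forall i j, (i <= j <= n)%nat -> p i <= p j).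
  { apply chain_le. intros i Hi. destruct (Hx i Hi) as [[A B] _]. lra. }
  assert (Hp : forall i, (i <= n)%nat -> 0 <= p i <= 1).
  { intros i Hi. rewrite <- H0, <- Hn. split; apply Hc; lia. }
  rewrite rs_sum_neg by auto.
  assert (Hg : forall x y, 0 <= x <= y -> y <= 1 -> G y <= G x) by (intros; apply G_mono; lra).
  pose proof (RS_bound G phi dphi 0 1 L Hg Hd Hdc HL Hint p xi (eps / (L + 1) / 2) n HL0
    ltac:(apply Rlt_le, Rmult_lt_0_compat; [apply Rdiv_lt_0_compat; lra| lra]) Hp
    ltac:(intros i Hi; destruct (Hx i Hi); split; [auto|lra])) as B.
  rewrite H0, Hn, G_0, G_1 in B. rewrite G_0, G_1.
  match goal with |- Rabs ?e < _ => replace e with (- (rs_sum phi G p xi n -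
       (phi 1 * 1 - phi 0 * 2 - RInt (fun x : R => G x * dphi x) 0 1))) by ring end.
  rewrite Rabs_Ropp. eapply Rle_lt_trans. apply B.
  replace (L * (eps / (L + 1) / 2) * (2 - 1)) with (eps * (L / (L + 1)) / 2) by (field; lra).
  assert (L / (L + 1) < 1). { apply (Rmult_lt_reg_r (L + 1)). lra. field_simplify; lra. }
  nra.
Qed.

Lemma RS_unique (g F : R -> R) a b I J : a < b ->
  is_RS_integral g F a b I -> is_RS_integral g F a b J -> I = J.
Proof.
  intros Hab HI HJ. apply Rminus_diag_uniq. apply Rabs_eq_0.
  destruct (Rle_lt_or_eq_dec 0 (Rabs (I - J)) (Rabs_pos _)) as [Hlt|Heq]; [|auto].
  exfalso. set (e := Rabs (I - J) / 2).
  destruct (HI e ltac:(unfold e; lra)) as [d1 [Hd1 H1]].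
  destruct (HJ e ltac:(unfold e; lra)) as [d2 [Hd2 H2]].
  destruct (INR_unbounded ((b - a) / Rmin d1 d2)) as [N HN].
  set (n := S N). set (p := fun i : nat => a + INR i * ((b - a) / INR n)).
  assert (Hn : 0 < INR n) by (unfold n; rewrite S_INR; pose proof (pos_INR N); lra).
  assert (Hstep : (b - a) / INR n < Rmin d1 d2).
  { assert (0 < Rmin d1 d2) by (apply Rmin_glb_lt; lra).
    apply (Rmult_lt_reg_r (INR n)). auto. unfold Rdiv. rewrite Rmult_assoc, Rinv_l by lra.
    rewrite Rmult_1_r. unfold n. rewrite S_INR.
    apply (Rmult_lt_reg_r (/ Rmin d1 d2)). apply Rinv_0_lt_compat; auto.
    replace ((Rmin d1 d2 * (INR N + 1)) * / Rmin d1 d2) with (INR N + 1) by (field; lra).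
    unfold Rdiv in HN. lra. }
  assert (P0 : p 0%nat = a) by (unfold p; simpl; ring).
  assert (Pn : p n = b) by (unfold p; field; lra).
  assert (Hc : forall i : nat, (i < n)%nat -> p i <= p i <= p (S i) /\ p (S i) - p i < Rmin d1 d2).
  { intros i _. unfold p. rewrite S_INR.
    assert (0 < (b - a) / INR n) by (apply Rdiv_lt_0_compat; lra). split; [split|]; nra. }
  specialize (H1 n p p P0 Pn ltac:(intros i Hi; destruct (Hc i Hi) as [A B];
    split; [auto| eapply Rlt_le_trans; [apply B| apply Rmin_l]])).
  specialize (H2 n p p P0 Pn ltac:(intros i Hi; destruct (Hc i Hi) as [A B];
    split; [auto| eapply Rlt_le_trans; [apply B| apply Rmin_r]])).
  assert (Rabs (I - J) <= Rabs (rs_sum g F p p n - J) + Rabs (rs_sum g F p p n - I)).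
  { replace (I - J) with ((rs_sum g F p p n - J) - (rs_sum g F p p n - I)) by ring.
    eapply Rle_trans. apply Rabs_triang. rewrite Rabs_Ropp. lra. }
  unfold e in *. lra.
Qed.

Lemma RS_integral_val (g F : R -> R) a b I : a < b ->
  is_RS_integral g F a b I -> RS_integral g F a b = I.
Proof.
  intros Hab H. unfold RS_integral.
  apply (iota_unique (V := R_CompleteNormedModule)).
  intros y Hy. eapply RS_unique; eauto. auto.
Qed.


Lemma floor_nat b : 0 <= b -> exists m : nat, INR m <= b <= INR m + 1.
Proof.
  intros Hb. destruct (base_Int_part b) as [H1 H2].
  assert (0 <= Int_part b)%Z. { assert (IZR (-1) < IZR (Int_part b)) by (simpl; lra).
    apply lt_IZR in H. lia. }
  exists (Z.to_nat (Int_part b)). rewrite INR_IZR_INZ, Z2Nat.id by auto. lra.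
Qed.

Lemma fix_alg c s Js Jc D X Y : s*s+c*c=1 -> D = 5/4 - c -> D <> 0 ->
  X*D = (1-c/2)*Js + (s/2)*Jc -> Y*D = (1-c/2)*Jc - (s/2)*Js ->
  X = Js + (c*X + s*Y)/2 /\ Y = Jc + (c*Y - s*X)/2.
Proof.
  intros H HD HD0 HX HY. split; apply (Rmult_eq_reg_r D); auto.
  - replace ((Js + (c*X + s*Y)/2) * D) with (Js*D + (c*(X*D) + s*(Y*D))/2) by field.
    rewrite HX, HY. subst D. assert (Js * (s*s) + Js*(c*c) = Js) by (transitivity (Js * (s*s+c*c)); [ring| rewrite H; ring]).
    nra.
  - replace ((Jc + (c*Y - s*X)/2) * D) with (Jc*D + (c*(Y*D) - s*(X*D))/2) by field.
    rewrite HX, HY. subst D. assert (Jc * (s*s) + Jc*(c*c) = Jc) by (transitivity (Jc * (s*s+c*c)); [ring| rewrite H; ring]).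
    nra.
Qed.

Section Improper.
Variable t : R.
Let c := cos t.
Let s := sin t.
Definition fs x := G x * sin (x * t).
Definition fc x := G x * cos (x * t).

Lemma ex_fs u v : 0 <= u <= v -> ex_RInt fs u v.
Proof.
  intros H. unfold fs. apply mono_mul_int with 2. lra.
  intros; apply G_mono; lra. intros; apply G_range; lra.
  intros x. apply (ex_derive_continuous (fun x => sin (x * t))). auto_derive; auto.
  intros; apply Rabs_le, SIN_bound.
Qed.

Lemma ex_fc u v : 0 <= u <= v -> ex_RInt fc u v.
Proof.
  intros H. unfold fc. apply mono_mul_int with 2. lra.
  intros; apply G_mono; lra. intros; apply G_range; lra.
  intros x. apply (ex_derive_continuous (fun x => cos (x * t))). auto_derive; auto.
  intros; apply Rabs_le, COS_bound.
Qed.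

Definition Fs b := RInt fs 0 b.
Definition Fc b := RInt fc 0 b.
Definition Js := Fs 1.
Definition Jc := Fc 1.
Definition Dd := 5/4 - c.
Definition Is := ((1 - c/2) * Js + (s/2) * Jc) / Dd.
Definition Ic := ((1 - c/2) * Jc - (s/2) * Js) / Dd.

Lemma Dd_pos : 1/4 <= Dd <= 9/4.
Proof. unfold Dd, c. pose proof (COS_bound t). lra. Qed.

Lemma sc1 : s * s + c * c = 1.
Proof. unfold s, c. pose proof (sin2_cos2 t). unfold Rsqr in H. lra. Qed.

Lemma fix_IsIc : Is = Js + (c * Is + s * Ic) / 2 /\ Ic = Jc + (c * Ic - s * Is) / 2.
Proof.
  pose proof Dd_pos. apply (fix_alg c s Js Jc Dd). apply sc1. reflexivity. lra.
  unfold Is. field. lra. unfold Ic. field. lra.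
Qed.

Lemma shift_rint (f : R -> R) b : 0 <= b -> ex_RInt f 1 (b + 1) ->
  RInt f 1 (b + 1) = RInt (fun y => f (y + 1)) 0 b.
Proof.
  intros Hb H.
  assert (H' : ex_RInt f (1 * 0 + 1) (1 * b + 1)) by (replace (1*0+1) with 1 by ring; replace (1*b+1) with (b+1) by ring; auto).
  pose proof (RInt_comp_lin (V := R_CompleteNormedModule) f 1 1 0 b H') as E.
  replace (1*0+1) with 1 in E by ring. replace (1*b+1) with (b+1) in E by ring.
  rewrite <- E. apply RInt_ext. intros x _. unfold scal; simpl. unfold mult; simpl.
  replace (1 * x + 1) with (x + 1) by ring. ring.
Qed.

Lemma shift_s b : 0 <= b -> Fs (b + 1) = Js + (c * Fs b + s * Fc b) / 2.
Proof.
  intros Hb. unfold Fs, Js, Fs.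
  rewrite <- (RInt_Chasles (V := R_CompleteNormedModule) fs 0 1 (b+1)) by (apply ex_fs; lra).
  rewrite shift_rint by (auto; apply ex_fs; lra).
  rewrite (RInt_ext (fun y => fs (y + 1)) (fun y => plus (scal (c/2) (fs y)) (scal (s/2) (fc y)))).
  2:{ rewrite Rmin_left, Rmax_right by lra. intros x Hx. unfold fs, fc, plus, scal; simpl. unfold mult; simpl.
      rewrite G_shift by lra. replace ((x + 1) * t) with (x * t + t) by ring. rewrite sin_plus.
      unfold c, s. field. }
  rewrite (RInt_plus (V := R_CompleteNormedModule)).
  2: apply (ex_RInt_scal (V := R_NormedModule)), ex_fs; lra. 2: apply (ex_RInt_scal (V := R_NormedModule)), ex_fc; lra.
  rewrite !(RInt_scal (V := R_CompleteNormedModule)) by ((apply ex_fs || apply ex_fc); lra).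
  unfold plus, scal; simpl. unfold mult; simpl. unfold Fc. field.
Qed.

Lemma shift_c b : 0 <= b -> Fc (b + 1) = Jc + (c * Fc b - s * Fs b) / 2.
Proof.
  intros Hb. unfold Fc, Jc, Fc.
  rewrite <- (RInt_Chasles (V := R_CompleteNormedModule) fc 0 1 (b+1)) by (apply ex_fc; lra).
  rewrite shift_rint by (auto; apply ex_fc; lra).
  rewrite (RInt_ext (fun y => fc (y + 1)) (fun y => plus (scal (c/2) (fc y)) (scal (-s/2) (fs y)))).
  2:{ rewrite Rmin_left, Rmax_right by lra. intros x Hx. unfold fs, fc, plus, scal; simpl. unfold mult; simpl.
      rewrite G_shift by lra. replace ((x + 1) * t) with (x * t + t) by ring. rewrite cos_plus.
      unfold c, s. field. }
  rewrite (RInt_plus (V := R_CompleteNormedModule)).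
  2: apply (ex_RInt_scal (V := R_NormedModule)), ex_fc; lra. 2: apply (ex_RInt_scal (V := R_NormedModule)), ex_fs; lra.
  rewrite !(RInt_scal (V := R_CompleteNormedModule)) by ((apply ex_fs || apply ex_fc); lra).
  unfold plus, scal; simpl. unfold mult; simpl. unfold Fs. field.
Qed.

Definition Nn b := (Fs b - Is) ^ 2 + (Fc b - Ic) ^ 2.

Lemma Nn_step b : 0 <= b -> Nn (b + 1) = Nn b / 4.
Proof.
  intros Hb. unfold Nn. rewrite shift_s, shift_c by auto.
  destruct fix_IsIc as [E1 E2]. pose proof sc1.
  set (X := Fs b) in *. set (Y := Fc b) in *.
  replace (Js + (c * X + s * Y) / 2 - Is) with ((c * (X - Is) + s * (Y - Ic)) / 2) by (rewrite E1 at 2; field).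
  replace (Jc + (c * Y - s * X) / 2 - Ic) with ((c * (Y - Ic) - s * (X - Is)) / 2) by (rewrite E2 at 2; field).
  set (u := X - Is). set (v := Y - Ic).
  transitivity ((s * s + c * c) * (u^2 + v^2) / 4). field. rewrite H. field.
Qed.

Lemma Fs_bound b : 0 <= b <= 1 -> Rabs (Fs b) <= 2.
Proof.
  intros Hb. unfold Fs. eapply Rle_trans. apply (abs_RInt_le_const _ 0 b 2). lra. apply ex_fs; lra.
  intros x Hx. unfold fs. rewrite Rabs_mult. pose proof (G_range x ltac:(lra)).
  rewrite (Rabs_pos_eq (G x)) by lra. assert (Rabs (sin (x * t)) <= 1) by (apply Rabs_le; apply SIN_bound).
  pose proof (Rabs_pos (sin (x*t))). nra. nra.
Qed.

Lemma Fc_bound b : 0 <= b <= 1 -> Rabs (Fc b) <= 2.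
Proof.
  intros Hb. unfold Fc. eapply Rle_trans. apply (abs_RInt_le_const _ 0 b 2). lra. apply ex_fc; lra.
  intros x Hx. unfold fc. rewrite Rabs_mult. pose proof (G_range x ltac:(lra)).
  rewrite (Rabs_pos_eq (G x)) by lra. assert (Rabs (cos (x * t)) <= 1) by (apply Rabs_le; apply COS_bound).
  pose proof (Rabs_pos (cos (x*t))). nra. nra.
Qed.

Definition KK := (2 + Rabs Is) ^ 2 + (2 + Rabs Ic) ^ 2.

Lemma Nn_bound n : forall b, INR n <= b <= INR n + 1 -> Nn b <= KK * (1/4) ^ n.
Proof.
  induction n; intros b Hb.
  - simpl in Hb. replace (0+1) with 1 in Hb by ring. rewrite pow_O, Rmult_1_r. unfold Nn, KK.
    pose proof (Fs_bound b Hb). pose proof (Fc_bound b Hb).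
    assert (A1 : Rabs (Fs b - Is) <= 2 + Rabs Is).
    { eapply Rle_trans. apply Rabs_triang. rewrite Rabs_Ropp. lra. }
    assert (A2 : Rabs (Fc b - Ic) <= 2 + Rabs Ic).
    { eapply Rle_trans. apply Rabs_triang. rewrite Rabs_Ropp. lra. }
    rewrite <- (pow2_abs (Fs b - Is)), <- (pow2_abs (Fc b - Ic)).
    apply Rplus_le_compat; apply pow_incr; split; try apply Rabs_pos; lra.
  - rewrite S_INR in Hb. pose proof (pos_INR n).
    replace b with ((b - 1) + 1) by ring. rewrite Nn_step by lra.
    specialize (IHn (b - 1) ltac:(lra)). simpl. lra.
Qed.

Lemma Nn_lim : forall eps, 0 < eps -> exists M, forall b, M < b -> Nn b < eps.
Proof.
  intros eps He.
  assert (HK : 0 <= KK) by (unfold KK; apply Rplus_le_le_0_compat; apply pow2_ge_0).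
  destruct (pow_lt_1_zero (1/4) ltac:(rewrite Rabs_pos_eq; lra) (eps / (KK + 1)) ltac:(apply Rdiv_lt_0_compat; lra)) as [N HN].
  exists (INR N). intros b Hb.
  destruct (floor_nat b ltac:(pose proof (pos_INR N); lra)) as [m Hm].
  assert (N <= m)%nat. { destruct (le_lt_dec N m); auto. apply le_INR in l. rewrite S_INR in l. lra. }
  specialize (HN m H). rewrite Rabs_pos_eq in HN by (apply pow_le; lra).
  eapply Rle_lt_trans. apply (Nn_bound m b Hm).
  apply Rle_lt_trans with (KK * (eps / (KK + 1))). apply Rmult_le_compat_l; lra.
  unfold Rdiv. rewrite <- Rmult_assoc. apply (Rmult_lt_reg_r (KK + 1)). lra.
  rewrite Rmult_assoc, Rinv_l by lra. nra.
Qed.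
End Improper.

Lemma sq_abs_lt u e : 0 < e -> u ^ 2 < e ^ 2 -> Rabs u < e.
Proof.
  intros He H. rewrite <- (Rabs_pos_eq e) by lra. apply Rsqr_lt_abs_0.
  unfold Rsqr. simpl in H. lra.
Qed.

Lemma int_sin_val t : int_sin t = Is t.
Proof.
  unfold int_sin. apply (is_RInt_gen_unique (V := R_CompleteNormedModule)).
  intros P [eps HP].
  destruct (Nn_lim t (eps ^ 2) ltac:(apply pow_lt, cond_pos)) as [M HM].
  apply Filter_prod with (Q := fun a => a = 0) (R := fun b => Rmax M 0 < b).
  - reflexivity.
  - exists (Rmax M 0). auto.
  - intros a b -> Hb. simpl. exists (RInt (fs t) 0 b). split.
    + apply (RInt_correct (V := R_CompleteNormedModule)), ex_fs. pose proof (Rmax_r M 0). lra.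
    + apply HP. change (Rabs (RInt (fs t) 0 b - Is t) < eps).
      apply sq_abs_lt. apply cond_pos.
      specialize (HM b ltac:(pose proof (Rmax_l M 0); lra)). unfold Nn, Fs in HM.
      pose proof (pow2_ge_0 (Fc t b - Ic t)). lra.
Qed.

Lemma int_cos_val t : int_cos t = Ic t.
Proof.
  unfold int_cos. apply (is_RInt_gen_unique (V := R_CompleteNormedModule)).
  intros P [eps HP].
  destruct (Nn_lim t (eps ^ 2) ltac:(apply pow_lt, cond_pos)) as [M HM].
  apply Filter_prod with (Q := fun a => a = 0) (R := fun b => Rmax M 0 < b).
  - reflexivity.
  - exists (Rmax M 0). auto.
  - intros a b -> Hb. simpl. exists (RInt (fc t) 0 b). split.
    + apply (RInt_correct (V := R_CompleteNormedModule)), ex_fc. pose proof (Rmax_r M 0). lra.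
    + apply HP. change (Rabs (RInt (fc t) 0 b - Ic t) < eps).
      apply sq_abs_lt. apply cond_pos.
      specialize (HM b ltac:(pose proof (Rmax_l M 0); lra)). unfold Nn, Fc in HM.
      pose proof (pow2_ge_0 (Fs t b - Is t)). lra.
Qed.


Definition vc t := 2 - cos t - t * Js t.
Definition vs t := t * Jc t - sin t.

Lemma char_val t : minkowski_char t = (vc t, vs t).
Proof.
  unfold minkowski_char. f_equal.
  - apply RS_integral_val. lra.
    replace (vc t) with (- (cos (1 * t) * G 1 - cos (0 * t) * G 0 -
      RInt (fun x => G x * (- (t * sin (x * t)))) 0 1)).
    apply RS_mink with (Rabs t).
    + apply Rabs_pos.
    + intros x. auto_derive; auto. ring.
    + intros x. apply (ex_derive_continuous (fun x => - (t * sin (x * t)))). auto_derive; auto.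
    + intros x. rewrite Rabs_Ropp, Rabs_mult. 
      assert (Rabs (sin (x * t)) <= 1) by (apply Rabs_le; apply SIN_bound).
      pose proof (Rabs_pos t). nra.
    + intros u v Hu Hv. apply (ex_RInt_ext (V := R_NormedModule) (fun x => scal (- t) (fs t x))).
      intros; unfold fs, scal; simpl; unfold mult; simpl; ring.
      apply (ex_RInt_scal (V := R_NormedModule)), ex_fs; lra.
    + rewrite (RInt_ext _ (fun x => scal (- t) (fs t x))).
      2:{ intros; unfold fs, scal; simpl; unfold mult; simpl; ring. }
      rewrite (RInt_scal (V := R_CompleteNormedModule)) by (apply ex_fs; lra).
      unfold vc, Js, Fs, scal; simpl; unfold mult; simpl. rewrite G_1, G_0.
      replace (1 * t) with t by ring. replace (0 * t) with 0 by ring. rewrite cos_0. ring.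
  - apply RS_integral_val. lra.
    replace (vs t) with (- (sin (1 * t) * G 1 - sin (0 * t) * G 0 -
      RInt (fun x => G x * (t * cos (x * t))) 0 1)).
    apply RS_mink with (Rabs t).
    + apply Rabs_pos.
    + intros x. auto_derive; auto. ring.
    + intros x. apply (ex_derive_continuous (fun x => (t * cos (x * t)))). auto_derive; auto.
    + intros x. rewrite Rabs_mult. 
      assert (Rabs (cos (x * t)) <= 1) by (apply Rabs_le; apply COS_bound).
      pose proof (Rabs_pos t). nra.
    + intros u v Hu Hv. apply (ex_RInt_ext (V := R_NormedModule) (fun x => scal t (fc t x))).
      intros; unfold fc, scal; simpl; unfold mult; simpl; ring.
      apply (ex_RInt_scal (V := R_NormedModule)), ex_fc; lra.
    + rewrite (RInt_ext _ (fun x => scal t (fc t x))).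
      2:{ intros; unfold fc, scal; simpl; unfold mult; simpl; ring. }
      rewrite (RInt_scal (V := R_CompleteNormedModule)) by (apply ex_fc; lra).
      unfold vs, Jc, Fc, scal; simpl; unfold mult; simpl. rewrite G_1, G_0.
      replace (1 * t) with t by ring. replace (0 * t) with 0 by ring. rewrite sin_0. ring.
Qed.

Lemma key t : (t * Is t - 2) ^ 2 + (t * Ic t) ^ 2 = (vc t ^ 2 + vs t ^ 2) / Dd t.
Proof.
  pose proof (Dd_pos t) as HD. pose proof (sc1 t) as Hs.
  unfold Dd in *. set (c := cos t) in *. set (s := sin t) in *.
  set (D := 5/4 - c) in *.
  assert (A1 : t * Is t - 2 = ((1 - c/2)*(t*Js t) + (s/2)*(t*Jc t) - 2*D)/D)
    by (unfold Is, Dd; fold c s D; field; lra).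
  assert (A2 : t * Ic t = ((1-c/2)*(t*Jc t) - (s/2)*(t*Js t))/D)
    by (unfold Ic, Dd; fold c s D; field; lra).
  assert (N1 : (1-c/2)*(t*Js t) + (s/2)*(t*Jc t) - 2*D = -(1-c/2)*vc t + (s/2)*vs t).
  { unfold vc, vs, D. fold c s. nra. }
  assert (N2 : (1-c/2)*(t*Jc t) - (s/2)*(t*Js t) = (1-c/2)*vs t + (s/2)*vc t).
  { unfold vc, vs. fold c s. field. }
  rewrite A1, A2, N1, N2.
  transitivity (((1-c/2)^2 + (s/2)^2) * (vc t ^2 + vs t ^2) / D^2). field. lra.
  replace ((1-c/2)^2 + (s/2)^2) with D by (unfold D; nra). field. lra.
Qed.

Lemma Js_opp t : Js (- t) = - Js t.
Proof.
  unfold Js, Fs. rewrite <- (RInt_opp (V := R_CompleteNormedModule)) by (apply ex_fs; lra).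
  apply RInt_ext. intros x _. change (G x * sin (x * - t) = - (G x * sin (x * t))). replace (x * - t) with (- (x * t)) by ring.
  rewrite sin_neg. ring.
Qed.

Lemma Jc_opp t : Jc (- t) = Jc t.
Proof.
  unfold Jc, Fc. apply RInt_ext. intros x _. unfold fc. replace (x * - t) with (- (x * t)) by ring.
  rewrite cos_neg. reflexivity.
Qed.

Lemma v2_opp t : vc (- t) ^ 2 + vs (- t) ^ 2 = vc t ^ 2 + vs t ^ 2.
Proof.
  unfold vc, vs. rewrite Js_opp, Jc_opp, cos_neg, sin_neg. ring.
Qed.

Lemma Cmod_char t : Cmod (minkowski_char t) = sqrt (vc t ^ 2 + vs t ^ 2).
Proof. rewrite char_val. reflexivity. Qed.

Theorem corollary3 :
  (forall eps : R, 0 < eps ->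
     exists M : R, forall t : R, M < Rabs t -> Cmod (minkowski_char t) < eps)
  <->
  (is_lim (fun t => t * int_sin t) p_infty 2 /\
   is_lim (fun t => t * int_cos t) p_infty 0).
Proof.
  split.
  - intros H.
    assert (Hsq : forall eps, 0 < eps -> exists M, forall t, M < t -> vc t ^ 2 + vs t ^ 2 < eps ^ 2).
    { intros eps He. destruct (H eps He) as [M HM]. exists M. intros t Ht.
      specialize (HM t ltac:(eapply Rlt_le_trans; [apply Ht| apply Rle_abs])).
      rewrite Cmod_char in HM. apply sqrt_lt_0_alt. rewrite sqrt_pow2 by lra. auto. }
    split; apply is_lim_spec; intros eps; simpl;
      destruct (Hsq (eps / 2) ltac:(pose proof (cond_pos eps); lra)) as [M HM];
      exists M; intros t Ht; specialize (HM t Ht);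
      pose proof (key t) as K; pose proof (Dd_pos t) as HD;
      pose proof (cond_pos eps);
      assert (Q : (t * Is t - 2) ^ 2 + (t * Ic t) ^ 2 < eps ^ 2)
        by (rewrite K; apply (Rmult_lt_reg_r (Dd t)); [lra|];
            unfold Rdiv; rewrite Rmult_assoc, Rinv_l by lra;
            pose proof (pow2_ge_0 (vc t)); pose proof (pow2_ge_0 (vs t)); nra).
    + rewrite int_sin_val. apply sq_abs_lt. lra. pose proof (pow2_ge_0 (t * Ic t)). lra.
    + rewrite int_cos_val, Rminus_0_r. apply sq_abs_lt. lra. pose proof (pow2_ge_0 (t * Is t - 2)). lra.
  - intros [H1 H2] eps He. apply is_lim_spec in H1. apply is_lim_spec in H2.
    destruct (H1 (mkposreal (eps / 3) ltac:(lra))) as [M1 HM1].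
    destruct (H2 (mkposreal (eps / 3) ltac:(lra))) as [M2 HM2].
    assert (Hpos : forall t, Rmax M1 M2 < t -> vc t ^ 2 + vs t ^ 2 < eps ^ 2).
    { intros t Ht. specialize (HM1 t ltac:(pose proof (Rmax_l M1 M2); lra)).
      specialize (HM2 t ltac:(pose proof (Rmax_r M1 M2); lra)). simpl in HM1, HM2.
      rewrite int_sin_val in HM1. rewrite int_cos_val, Rminus_0_r in HM2.
      pose proof (key t) as K. pose proof (Dd_pos t) as HD.
      assert (E : vc t ^ 2 + vs t ^ 2 = Dd t * ((t * Is t - 2) ^ 2 + (t * Ic t) ^ 2))
        by (rewrite K; field; lra).
      rewrite E. rewrite <- (pow2_abs (t * Is t - 2)), <- (pow2_abs (t * Ic t)).
      pose proof (Rabs_pos (t * Is t - 2)). pose proof (Rabs_pos (t * Ic t)).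
      assert (Rabs (t * Is t - 2) ^ 2 <= (eps/3)^2) by (apply pow_incr; lra).
      assert (Rabs (t * Ic t) ^ 2 <= (eps/3)^2) by (apply pow_incr; lra).
      nra. }
    exists (Rmax M1 M2). intros t Ht. rewrite Cmod_char.
    rewrite <- (sqrt_pow2 eps) by lra.
    assert (vc t ^ 2 + vs t ^ 2 < eps ^ 2).
    { destruct (Rle_dec 0 t).
      - rewrite Rabs_pos_eq in Ht by auto. apply Hpos; auto.
      - rewrite Rabs_left in Ht by lra. rewrite <- v2_opp. apply Hpos; auto. }
    apply sqrt_lt_1_alt. split; auto. pose proof (pow2_ge_0 (vc t)). pose proof (pow2_ge_0 (vs t)). lra.
Qed.
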